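(* Let $\mathbf{C}=\{\mathfrak{F}_k\mid k\ge1\}$ and let $\vDash_{\mathbf{ML}}$ denote $\vDash_{\mathbf{C}}$. Let $p_0$ be a propositional variable not occurring in any $\boldsymbol{bd}_i$. Then $\{\boldsymbol{bd}_i\to p_0\mid i\ge1\}\vDash_{\mathbf{ML}}p_0$, but $\Gamma'\nvDash_{\mathbf{ML}}p_0$ for every finite $\Gamma'\subseteq\{\boldsymbol{bd}_i\to p_0\mid i\ge1\}$. Hence $\vDash_{\mathbf{ML}}$ is not compact.
   Context: Formulas are built from a countably infinite set of propositional variables and $\bot$ using $\land,\lor,\to$; intuitionistic Kripke semantics with valuations assigning upward-closed sets. For $k\ge1$, $\mathfrak{F}_k=\langle\wp^*(k),\supseteq\rangle$, where $k=\{0,\dots,k-1\}$ and $\wp^*(k)$ is the set of non-empty subsets of $k$. For a poset $\mathfrak{P}$, $\Gamma\vDash_{\mathfrak{P}}\varphi$ means: for every valuation $V$ and every point $w$, if all formulas of $\Gamma$ are forced at $w$ then $\varphi$ is forced at $w$; for a class $\mathbf{C}$, $\Gamma\vDash_{\mathbf{C}}\varphi$ means $\Gamma\vDash_{\mathfrak{P}}\varphi$ for all $\mathfrak{P}\in\mathbf{C}$. For $i\ge1$, $\boldsymbol{bd}_i$ is the formula $p_i\lor(p_i\to(p_{i-1}\lor(p_{i-1}\to(\cdots(p_1\lor(p_1\to\bot))\cdots))))$ in the variables $p_1,\dots,p_i$. *)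

(* Defs.v *)
From mathcomp Require Import all_boot.
Set Implicit Arguments. Unset Strict Implicit. Unset Printing Implicit Defensive.

Inductive form : Type :=
| Var : nat -> form
| Bot : form
| And : form -> form -> form
| Or  : form -> form -> form
| Imp : form -> form -> form.

Fixpoint occurs (n : nat) (f : form) : Prop :=
  match f with
  | Var m => m = n
  | Bot => False
  | And a b | Or a b | Imp a b => occurs n a \/ occurs n b
  end.

(* bd_i = p_i \/ (p_i -> bd_{i-1}), with bd_0 := Bot, so that
   bd_1 = p_1 \/ (p_1 -> Bot). Only used for i >= 1. *)
Fixpoint bd (i : nat) : form :=
  match i with
  | 0 => Bot
  | i'.+1 => Or (Var i'.+1) (Imp (Var i'.+1) (bd i'))
  end.

(* Kripke semantics on a (pre)ordered set W with order R (R w v : v is above w). *)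
Definition upward_closed (W : Type) (R : W -> W -> Prop) (V : nat -> W -> Prop) :=
  forall p w v, R w v -> V p w -> V p v.

Fixpoint forces (W : Type) (R : W -> W -> Prop) (V : nat -> W -> Prop)
    (w : W) (f : form) : Prop :=
  match f with
  | Var p => V p w
  | Bot => False
  | And a b => forces R V w a /\ forces R V w b
  | Or a b => forces R V w a \/ forces R V w b
  | Imp a b => forall v, R w v -> forces R V v a -> forces R V v b
  end.

Definition entails (W : Type) (R : W -> W -> Prop) (Gamma : form -> Prop) (phi : form) :=
  forall V : nat -> W -> Prop, upward_closed R V ->
  forall w : W, (forall g, Gamma g -> forces R V w g) -> forces R V w phi.

Definition Fk_carrier (k : nat) := {A : {set 'I_k} | A != set0}.
Definition Fk_le (k : nat) (A B : Fk_carrier k) : Prop := val B \subset val A.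

Definition entails_ML (Gamma : form -> Prop) (phi : form) :=
  forall k, 1 <= k -> entails (@Fk_le k) Gamma phi.

Fixpoint inseq (g : form) (s : seq form) : Prop :=
  match s with nil => False | cons h t => h = g \/ inseq g t end.

Definition compact_ML :=
  forall (Gamma : form -> Prop) (phi : form), entails_ML Gamma phi ->
  exists Gamma' : seq form, (forall g, inseq g Gamma' -> Gamma g) /\
    entails_ML (fun g => inseq g Gamma') phi.

(* Main.v *)
From Stdlib Require Import Classical.
Require Import Defs.
From mathcomp Require Import all_boot.

Lemma persist (W : Type) (R : W -> W -> Prop) (V : nat -> W -> Prop) :
  (forall a b c, R a b -> R b c -> R a c) -> upward_closed R V ->
  forall f w v, R w v -> forces R V w f -> forces R V v f.
Proof.
move=> tr up; elim=> [p||a IHa b IHb|a IHa b IHb|a IHa b IHb] w v Rwv /=.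
- exact: up.
- by [].
- by case=> h1 h2; split; [exact: IHa h1|exact: IHb h2].
- by case=> h; [left; exact: IHa h|right; exact: IHb h].
- move=> h u Rvu; apply: h; exact: tr Rwv Rvu.
Qed.

Lemma Fk_trans k : forall a b c : Fk_carrier k, Fk_le a b -> Fk_le b c -> Fk_le a c.
Proof. move=> a b c h1 h2; rewrite /Fk_le; exact: subset_trans h2 h1. Qed.

Lemma bd_valid k V : upward_closed (@Fk_le k) V ->
  forall i (w : Fk_carrier k), #|val w| <= i -> forces (@Fk_le k) V w (bd i).
Proof.
move=> up; elim=> [|i IH] w hw /=.
  move: hw; rewrite leqn0 cards_eq0 => /eqP e.
  by case: w e => A /= /negP hA e; apply: hA; rewrite e.
case: (classic (V i.+1 w)) => hV; [by left|right].
move=> v Rwv Hv; apply: IH.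
case: (boolP (val v == val w)) => [/eqP e|ne].
  exfalso; apply: hV; apply: up Hv; rewrite /Fk_le e; exact: subxx.
have hp : val v \proper val w by rewrite properEneq ne.
by rewrite -ltnS; apply: leq_trans hw; exact: proper_card.
Qed.

Lemma mkA_ne N m : [set x : 'I_N.+1 | x <= m] != set0.
Proof. by apply/set0Pn; exists ord0; rewrite inE. Qed.

Definition mkA N m : Fk_carrier N.+1 := exist (fun A : {set 'I_N.+1} => A != set0) _ (mkA_ne N m).

Definition Vc N (p : nat) (B : Fk_carrier N.+1) : Prop :=
  if p is 0 then exists x : 'I_N.+1, x \notin val B
  else forall x : 'I_N.+1, x \in val B -> x < p.

Lemma Vc_up N : upward_closed (@Fk_le N.+1) (Vc N).
Proof.
move=> [|p] w v Rwv /=.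
  by case=> x hx; exists x; apply/negP => hv; move/negP: hx; apply; exact: (subsetP Rwv).
by move=> h x hx; apply: h; exact: (subsetP Rwv).
Qed.

Lemma refute N : forall i m, i <= m -> m <= N ->
  ~ forces (@Fk_le N.+1) (Vc N) (mkA N m) (bd i).
Proof.
elim=> [|i IH] m him hmN /=; first by [].
case.
  move=> h; have := h (inord m); rewrite inE inordK ?ltnS // => /(_ (leqnn _)) hm.
  by move: (leq_ltn_trans hm him); rewrite ltnn.
move=> h; have := IH i (leqnn _) (leq_trans (ltnW him) hmN); apply.
apply: (h (mkA N i)).
  rewrite /Fk_le /=; apply/subsetP => x; rewrite !inE => hx.
  exact: leq_trans hx (ltnW him).
by move=> x /=; rewrite inE.
Qed.

Lemma bound (G : form -> Prop) n0 (s : seq form) :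
  (forall g, inseq g s -> exists2 i, 1 <= i & g = Imp (bd i) (Var n0)) ->
  exists N, forall g, inseq g s -> exists2 i, 1 <= i & (i <= N /\ g = Imp (bd i) (Var n0)).
Proof.
elim: s => [|h t IH] H; first by exists 0.
have [N HN] : exists N, forall g, inseq g t ->
   exists2 i, 1 <= i & (i <= N /\ g = Imp (bd i) (Var n0)).
  by apply: IH => g hg; apply: H; right.
have [j hj ej] := H h (or_introl erefl).
exists (maxn N j) => g [<-|hg].
  by exists j => //; split => //; exact: leq_maxr.
have [i hi [hiN e]] := HN g hg.
by exists i => //; split => //; exact: leq_trans hiN (leq_maxl _ _).
Qed.

Theorem mainTheorem11 (n0 : nat) :
  (forall i, 1 <= i -> ~ occurs n0 (bd i)) ->
  let Gamma := fun g => exists2 i, 1 <= i & g = Imp (bd i) (Var n0) in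
  entails_ML Gamma (Var n0) /\
  (forall Gamma' : seq form, (forall g, inseq g Gamma' -> Gamma g) ->
     ~ entails_ML (fun g => inseq g Gamma') (Var n0)) /\
  ~ compact_ML.
Proof.
move=> hocc Gamma.
have P1 : entails_ML Gamma (Var n0).
  move=> k hk V up w H.
  have := H (Imp (bd k) (Var n0)) (ex_intro2 _ _ k hk erefl).
  move=> /= h; apply: h; first by rewrite /Fk_le; exact: subxx.
  apply: bd_valid => //; apply: leq_trans (max_card _) _; by rewrite card_ord.
have e0 : n0 = 0.
  case: n0 hocc {Gamma P1} => // m hocc; exfalso; apply: (hocc m.+1) => //=; by left.
subst n0.
have P2 : forall Gamma' : seq form, (forall g, inseq g Gamma' -> Gamma g) ->
     ~ entails_ML (fun g => inseq g Gamma') (Var 0).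
  move=> G' HG' hent.
  have [N HN] := @bound Gamma 0 G' HG'.
  have := hent N.+1 (ltn0Sn _) (Vc N) (@Vc_up N) (mkA N N).
  have root : forall x : 'I_N.+1, x \in val (mkA N N).
    by move=> x; rewrite inE -ltnS.
  case.
    move=> g hg; have [i hi [hiN ->]] := HN g hg.
    move=> v Rv Hv /=; apply: NNPP => hno.
    have allin : forall x : 'I_N.+1, x \in val v.
      move=> x; apply: NNPP => hx; apply: hno; exists x; by apply/negP.
    have := @refute N i N hiN (leqnn N); apply.
    apply: (@persist _ _ _ (@Fk_trans N.+1) (@Vc_up N) (bd i) v) => //.
    by rewrite /Fk_le; apply/subsetP => x _; exact: allin.
  by case=> x /= hx; rewrite inE -ltnS hx.
split => //; split => //.
move=> comp; have [G' [h1 h2]] := comp _ _ P1.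
exact: P2 G' h1 h2.
Qed.
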